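(* Let $G$ be a claw-free graph and $C$ an even hole of length $2k$ with $k>2$, labelled $C=\mathbf{b}_0-\mathbf{a}_0-\mathbf{b}_1-\mathbf{a}_1-\dots-\mathbf{b}_{k-1}-\mathbf{a}_{k-1}-\mathbf{b}_0$. Let $\mathbf{s}\notin C$ with $\Gamma_C(\mathbf{s})=\{\mathbf{b}_0,\mathbf{a}_0,\mathbf{b}_1\}$. If a vertex $\mathbf{t}\notin C\cup\{\mathbf{s}\}$ is adjacent to at least one of $\mathbf{s},\mathbf{a}_0$ and to both $\mathbf{b}_0$ and $\mathbf{b}_1$, then $\mathbf{t}$ is adjacent to both $\mathbf{s}$ and $\mathbf{a}_0$.
   Context: A hole is an induced cycle of length at least 4; an even hole has even length. Claw-free: no induced $K_{1,3}$. $\Gamma_C(\mathbf{s})$ is the set of neighbours of $\mathbf{s}$ in $C$. *)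

(* Defs.v *)
From mathcomp Require Import all_boot.
Set Implicit Arguments. Unset Strict Implicit. Unset Printing Implicit Defensive.

Definition simple_graph (T : finType) (e : rel T) : Prop :=
  symmetric e /\ irreflexive e.

Definition claw_free (T : finType) (e : rel T) : Prop :=
  ~ exists w x y z : T,
      [/\ e w x, e w y & e w z] /\
      [/\ x != y, x != z & y != z] /\
      [/\ ~~ e x y, ~~ e x z & ~~ e y z].

Definition induced_cycle (T : finType) (e : rel T) (n : nat) (c : nat -> T) : Prop :=
  (forall i j, i < n -> j < n -> c i = c j -> i = j) /\
  (forall i j, i < n -> j < n ->
     e (c i) (c j) = (j == (i + 1) %% n) || (i == (j + 1) %% n)).

Definition is_hole (T : finType) (e : rel T) (n : nat) (c : nat -> T) : Prop :=
  4 <= n /\ induced_cycle e n c.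

(* Main.v *)
Require Import Defs.
From mathcomp Require Import all_boot.
From mathcomp Require Import zify.

Lemma modS (n i : nat) : i < n -> (i + 1) %% n = if i.+1 == n then 0 else i + 1.
Proof.
move=> H; case: eqP => E.
  by rewrite addn1 E modnn.
by rewrite modn_small //; lia.
Qed.

Theorem corollary4 (T : finType) (e : rel T) (k : nat) (c : nat -> T) (s t : T) :
  simple_graph e -> claw_free e ->
  2 < k -> is_hole e (2 * k) c ->
  (forall i, i < 2 * k -> s != c i) ->
  (forall i, i < 2 * k -> e s (c i) = (i <= 2)) ->
  (forall i, i < 2 * k -> t != c i) -> t != s ->
  (e t s || e t (c 1)) -> e t (c 0) -> e t (c 2) ->
  e t s && e t (c 1).
Proof.
move=> [esym eirr] cf k2 [_ [cinj cadj]] sC sadj tC ts tsa t0 t2.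
set n := 2 * k in cinj cadj sC sadj tC.
have n6 : 6 <= n by rewrite /n; lia.
clearbody n.
have mN : (n - 1 + 1) %% n = 0 by rewrite subnK ?modnn //; lia.
have ne : forall i j, i < n -> j < n -> i != j -> c i != c j.
  move=> i j hi hj; apply: contra => /eqP /cinj; move=> /(_ hi hj) ->; done.
have e10 : e (c 1) (c 0) by (rewrite cadj ?mN ?modn_small //; clear -n6; lia).
have e12 : e (c 1) (c 2) by (rewrite cadj ?mN ?modn_small //; clear -n6; lia).
have e0n : e (c 0) (c (n-1)) by (rewrite cadj ?mN ?modn_small //; clear -n6; lia).
have e23 : e (c 2) (c 3) by (rewrite cadj ?mN ?modn_small //; clear -n6; lia).
have n1n : ~~ e (c 1) (c (n-1)) by (rewrite cadj ?mN ?modn_small //; clear -n6; lia).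
have n02 : ~~ e (c 0) (c 2) by (rewrite cadj ?mN ?modn_small //; clear -n6; lia).
have n13 : ~~ e (c 1) (c 3) by (rewrite cadj ?mN ?modn_small //; clear -n6; lia).
have n3n : ~~ e (c 3) (c (n-1)) by (rewrite cadj ?mN ?modn_small //; clear -n6; lia).
have sn : ~~ e s (c (n-1)) by rewrite sadj -?ltnNge; clear -n6; lia.
have s3 : ~~ e s (c 3) by rewrite sadj -?ltnNge; clear -n6; lia.
have s0 : e s (c 0) by rewrite sadj //; clear -n6; lia.
have s2 : e s (c 2) by rewrite sadj //; clear -n6; lia.
have claw : forall w x y z, e w x -> e w y -> e w z -> x != y -> x != z -> y != z ->
   ~~ e x y -> ~~ e x z -> ~~ e y z -> False.
  move=> w x y z *; apply: cf; exists w, x, y, z; split; first by split.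
  by split; split.
have c0n : c 0 != c (n-1) by apply: ne; clear -n6; lia.
have c01 : c 0 != c 1 by apply: ne; clear -n6; lia.
have c12 : c 1 != c 2 by apply: ne; clear -n6; lia.
have c23 : c 2 != c 3 by apply: ne; clear -n6; lia.
have c1n : c 1 != c (n-1) by apply: ne; clear -n6; lia.
have c13 : c 1 != c 3 by apply: ne; clear -n6; lia.
have c3n : c 3 != c (n-1) by apply: ne; clear -n6; lia.
have s1 : s != c 1 by apply: sC; clear -n6; lia.
have s3' : s != c 3 by apply: sC; clear -n6; lia.
have sn' : s != c (n-1) by apply: sC; clear -n6; lia.
have t1' : t != c 1 by apply: tC; clear -n6; lia.
have tn' : t != c (n-1) by apply: tC; clear -n6; lia.
have t3' : t != c 3 by apply: tC; clear -n6; lia.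
have E : forall x y, e x y = e y x by move=> x y; apply: esym.
case/orP: tsa => [tsx | t1]; apply/andP; split => //; apply/negPn/negP => H.
- have tn : e t (c (n-1)).
    apply/negPn/negP => H2; apply: (claw (c 0) (c 1) (c (n-1)) t) => //; first [done | by rewrite E | by rewrite eq_sym].
  have t3 : e t (c 3).
    apply/negPn/negP => H2; apply: (claw (c 2) (c 1) (c 3) t) => //; first [done | by rewrite E | by rewrite eq_sym].
  by apply: (claw t (c 3) (c (n-1)) s) => //; first [done | by rewrite E | by rewrite eq_sym].
- have tn : e t (c (n-1)).
    apply/negPn/negP => H2; apply: (claw (c 0) s (c (n-1)) t) => //; first [done | by rewrite E | by rewrite eq_sym].
  have t3 : e t (c 3).
    apply/negPn/negP => H2; apply: (claw (c 2) s (c 3) t) => //; first [done | by rewrite E | by rewrite eq_sym].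
  by apply: (claw t (c 3) (c (n-1)) (c 1)) => //; first [done | by rewrite E | by rewrite eq_sym].
Qed.
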